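(* Consider the model in the context with $\gamma<0$, and let $s,t\in\mathcal{T}$ with $t\geq s+2$ and $t+1\le T$. Under Assumption A, for both $\tau=s$ and $\tau=t$: \[ P(y_{\tau}=1\mid w^{T},y_{s-1}=y_{t-1},y_{s+1}=y_{t+1}=1,\alpha)=F_{\epsilon|\alpha}(w_{\tau}+\gamma y_{\tau-1}+\alpha)\,P(E_{\tau+1,1}\mid w^{T},y_{s-1}=y_{t-1},y_{s+1}=y_{t+1}=1,\alpha), \] and \[ P(y_{\tau}=1\mid w^{T},y_{s-1}=y_{t-1},y_{s+1}=y_{t+1}=0,\alpha)=P(E_{\tau+1,2}\mid w^{T},y_{s-1}=y_{t-1},y_{s+1}=y_{t+1}=0,\alpha)+F_{\epsilon|\alpha}(w_{\tau}+\gamma y_{\tau-1}+\alpha)\,P(E_{\tau+1,3}\mid w^{T},y_{s-1}=y_{t-1},y_{s+1}=y_{t+1}=0,\alpha), \] where on the right-hand sides $y_{\tau-1}$ denotes its (common) conditioned value.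
   Context: Model: $y_0\in\{0,1\}$ observed and, for $t\in\mathcal{T}=\{1,\dots,T\}$, $y_{t}=1[x_{t}^{\prime}\beta+\gamma y_{t-1}+\alpha-\epsilon_{t}>0]$, $x_t\in\mathbb{R}^K$ observed, $\alpha$ an unobserved individual effect, $\epsilon_t$ unobserved errors. $w_t=x_t'\beta$, $w^T=(w_1,\dots,w_T)$. For each $t$, define the partition $E_{t,1}=\{\epsilon_t<w_t+\gamma+\alpha\}$, $E_{t,2}=\{w_t+\gamma+\alpha\le\epsilon_t<w_t+\alpha\}$, $E_{t,3}=\{\epsilon_t\ge w_t+\alpha\}$. Assumption A: for all $\alpha$ and $s,t\in\mathcal{T}$: (a)(i) $\epsilon^T\perp(x^T,y_0)\mid\alpha$, (ii) $\epsilon_s\perp\epsilon_t\mid\alpha$ ($s\ne t$), (iii) $\epsilon_s\overset{d}{=}\epsilon_t\mid\alpha$, with common CDF $F_{\epsilon|\alpha}$; (b) $F_{\epsilon|\alpha}$ absolutely continuous with support $\mathbb{R}$; (c) $x_{ts,1}$ (first component of $x_t-x_s$) has a.e. positive density on $\mathbb{R}$ given the remaining components and $\alpha$, and $\beta_1\ne0$; (d) the support of $x_t-x_s$ given $\alpha$ is not in a proper linear subspace of $\mathbb{R}^K$; (e) $\|\beta\|_2=1$, $\gamma$ in the interior of a compact $\mathcal{R}\subset\mathbb{R}$. *)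

(* Defs.v *)
From HB Require Import structures.
From mathcomp Require Import all_boot all_order all_algebra.
From mathcomp Require Import all_classical all_reals all_analysis.
Set Implicit Arguments. Unset Strict Implicit. Unset Printing Implicit Defensive.
Import Order.TTheory GRing.Theory Num.Theory.
Local Open Scope classical_set_scope.
Local Open Scope ring_scope.

Section DynBinary.
Context {R : realType}.

(* mutual independence of a finite family of real random variables:
   product rule for every family of Borel sets (taking B i = setT for the
   indices not in a subfamily gives the product rule for every subfamily). *)
Definition mutually_independent {d} {Omega : measurableType d}
  (P : probability Omega R) (n : nat) (X : 'I_n -> Omega -> R) : Prop :=
  forall B : 'I_n -> set R, (forall i, measurable (B i)) ->
    P (\bigcap_(i in [set: 'I_n]) (X i @^-1` B i)) =
    (\prod_(i < n) P (X i @^-1` B i))%E.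

Definition abs_cont_cdf (F : R -> R) : Prop :=
  exists f : R -> R, (forall u, 0 <= f u) /\ measurable_fun setT f /\
    forall c, (F c)%:E = (\int[lebesgue_measure]_(u in `]-oo, c]) (f u)%:E)%E.

Definition full_support_cdf (F : R -> R) : Prop :=
  forall a b, a < b -> F a < F b.

Definition index_w (K : nat) (x : nat -> 'I_K -> R) (beta : 'I_K -> R) (t : nat) : R :=
  \sum_(i < K) x t i * beta i.

Fixpoint ydyn {Omega : Type} (w : nat -> R) (gamma alpha : R)
  (eps : nat -> Omega -> R) (y0 : Omega -> bool) (t : nat) (om : Omega) : bool :=
  match t with
  | 0 => y0 om
  | t'.+1 => 0 < w t + gamma * (ydyn w gamma alpha eps y0 t' om)%:R + alpha - eps t om
  end.

Definition E1 {Omega : Type} (w : nat -> R) (gamma alpha : R) (eps : nat -> Omega -> R) t :=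
  [set om | eps t om < w t + gamma + alpha].
Definition E2 {Omega : Type} (w : nat -> R) (gamma alpha : R) (eps : nat -> Omega -> R) t :=
  [set om | w t + gamma + alpha <= eps t om /\ eps t om < w t + alpha].
Definition E3 {Omega : Type} (w : nat -> R) (gamma alpha : R) (eps : nat -> Omega -> R) t :=
  [set om | w t + alpha <= eps t om].

(* elementary conditional probability P(A | C) = P(A /\ C) / P(C)
   (with the convention x / 0 = 0) *)
Definition condP {d} {Omega : measurableType d} (P : probability Omega R)
  (A C : set Omega) : R := fine (P (A `&` C)) / fine (P C).

End DynBinary.

(* Main.v *)
Require Import Defs.
From HB Require Import structures.
From mathcomp Require Import all_boot all_order all_algebra.
From mathcomp Require Import all_classical all_reals all_analysis.
From mathcomp Require Import measurable_realfun.
From mathcomp Require Import zify.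
From Stdlib Require Import Lia.
Import Order.TTheory GRing.Theory Num.Theory.
Local Open Scope classical_set_scope.
Local Open Scope ring_scope.
Section Indep.
Context {R : realType} {dm : measure_display} {Omega : measurableType dm}
  (P : probability Omega R) (n : nat) (Z : 'I_n -> Omega -> R)
  (mZ : forall i, measurable_fun setT (Z i))
  (hind : mutually_independent P Z) (j : 'I_n).

Definition Grect : set (set Omega) :=
  [set A | exists B : 'I_n -> set R, (forall i, measurable (B i)) /\ B j = setT /\
     A = \bigcap_(i in [set: 'I_n]) (Z i @^-1` B i)].

Lemma Grect_setI : setI_closed Grect.
Proof.
move=> A A' [B [mB [Bj ->]]] [B' [mB' [Bj' ->]]].
exists (fun i => B i `&` B' i); split; first by move=> i; apply: measurableI.
split; first by rewrite Bj Bj' setIT.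
by apply/seteqP; split => om /=; [move=> [H1 H2] i _; split; [exact: H1|exact: H2]
  | move=> H; split => i _; have [] := H i I].
Qed.

Lemma rect_meas (B : 'I_n -> set R) : (forall i, measurable (B i)) ->
  measurable (\bigcap_(i in [set: 'I_n]) (Z i @^-1` B i)).
Proof.
move=> mB; apply: fin_bigcap_measurable; first exact: finite_finset.
by move=> i _; rewrite -(setTI (_ @^-1` _)); apply: mZ.
Qed.

Let fP (A : set Omega) : measurable A -> P A = (fine (P A))%:E.
Proof. by move=> mA; rewrite fineK // fin_num_measure. Qed.

Lemma indep_sigma (X : set R) : measurable X ->
  forall A, <<s Grect >> A -> P (A `&` Z j @^-1` X) = (P A * P (Z j @^-1` X))%E.
Proof.
move=> mX.
have mZX : measurable (Z j @^-1` X) by rewrite -(setTI (_ @^-1` _)); apply: mZ.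
set H := [set A | measurable A /\ P (A `&` Z j @^-1` X) = (P A * P (Z j @^-1` X))%E].
suff: <<s Grect >> `<=` H by move=> sub A /sub [].
apply: lambda_system_subset; [exact: Grect_setI| | |by []].
- apply/dynkin_lambda_system; split.
  + split; first exact: measurableT.
    by rewrite setTI probability_setT mul1e.
  + move=> A [mA HA]; split; first exact: measurableC.
    have mAC : measurable (~` A) by exact: measurableC.
    rewrite setIC -setDE.
    transitivity (P (Z j @^-1` X) - P (Z j @^-1` X `&` A))%E.
      by apply: measureD => //; rewrite ltey_eq fin_num_measure.
    have -> : P (Z j @^-1` X `&` A) = (P A * P (Z j @^-1` X))%E.
      by rewrite setIC; exact: HA.
    have -> : P (~` A) = (1 - P A)%E by exact: probability_setC.
    rewrite (fP _ mZX) (fP _ mA) -EFinM -EFinB -EFinB -EFinM; congr (_%:E).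
    by rewrite mulrBl mul1r.
  + move=> F tF HF; split.
      by apply: bigcup_measurable => k _; have [] := HF k.
    rewrite setI_bigcupl.
    transitivity (\sum_(i <oo | i \in [set: nat]) P (F i `&` Z j @^-1` X))%E.
      rewrite -(measure_bigcup P).
        by [].
      by move=> i _; apply: measurableI => //; have [] := HF i.
      by apply: trivIset_setIr.
    have -> : P (\bigcup_k F k) = (\sum_(i <oo | i \in [set: nat]) P (F i))%E.
      by apply: measure_bigcup => // i _; have [] := HF i.
    transitivity (\sum_(i <oo | i \in [set: nat]) ((fine (P (Z j @^-1` X)))%:E * P (F i)))%E.
      apply: eq_eseriesr => i _; have [_ ->] := HF i.
      by rewrite muleC -(fP _ mZX).
    rewrite nneseriesZl; last by move=> i _; exact: measure_ge0.
    by rewrite muleC -(fP _ mZX).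
- move=> A [B [mB [Bj ->]]]; split; first exact: rect_meas.
  pose B' := fun i => if i == j then X else B i.
  have -> : \bigcap_(i in [set: 'I_n]) (Z i @^-1` B i) `&` Z j @^-1` X =
    \bigcap_(i in [set: 'I_n]) (Z i @^-1` B' i).
    apply/seteqP; split => om /=.
      move=> [H1 H2] i _; rewrite /B'; case: eqP => [->|_] //; exact: H1.
    move=> HH; split; last by have := HH j I; rewrite /B' eqxx.
    move=> i _; have := HH i I; rewrite /B'; case: eqP => [->|_] //.
    by rewrite Bj.
  have mB' : forall i, measurable (B' i) by move=> i; rewrite /B'; case: eqP.
  rewrite !hind //.
  rewrite (bigD1 j) //= (bigD1 j (F := fun i => P (Z i @^-1` B i))) //=.
  rewrite /B' eqxx Bj preimage_setT probability_setT mul1e.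
  rewrite muleC; congr (_ * _)%E.
  by apply: eq_bigr => i /negbTE ->.
Qed.
End Indep.
Lemma arch_lt {R : realType} (x c : R) : x < c ->
  exists N, forall n, (N <= n)%N -> x <= c - n.+1%:R^-1.
Proof.
move=> xc; exists (Num.truncn (c - x)^-1) => n Nn.
have cx0 : 0 < c - x by rewrite subr_gt0.
rewrite lerBrDr addrC -lerBrDr.
have h := truncnS_gt ((c - x)^-1).
rewrite -(invrK (c - x)) ltW //.
rewrite ltf_pV2 ?posrE ?invr_gt0 //.
apply: (lt_le_trans h); by rewrite ler_nat ltnS.
Qed.

Section CDF.
Context {R : realType} {dm : measure_display} {Omega : measurableType dm}
  (P : probability Omega R).

Lemma cdf_lt (X : Omega -> R) (F : R -> R) :
  measurable_fun setT X ->
  (forall c, P (X @^-1` `]-oo, c]) = (F c)%:E) -> abs_cont_cdf F ->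
  forall c, P (X @^-1` `]-oo, c[) = (F c)%:E.
Proof.
move=> mX hF [f [f0 [mf hf]]] c.
pose I n : set R := [set` `]-oo, c - n.+1%:R^-1]].
have mXp (B : set R) : measurable B -> measurable (X @^-1` B).
  by move=> mB; rewrite -(setTI (_ @^-1` _)); apply: mX.
have ndI : {homo I : n m / (n <= m)%N >-> (n <= m)%O}.
  move=> n m nm; apply/subsetPset => x; rewrite /I /= !in_itv /= => xn.
  apply: (le_trans xn); rewrite lerD2l lerN2 lef_pV2 ?posrE ?ltr0Sn //.
  by rewrite ler_nat ltnS.
have cupI : \bigcup_n I n = [set` `]-oo, c[].
  apply/seteqP; split => x /=.
    move=> [n _]; rewrite /I /= !in_itv /= => xn.
    apply: (le_lt_trans xn); rewrite ltrBlDr ltrDl invr_gt0 ltr0Sn //.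
  rewrite in_itv /= => xc; have [N HN] := arch_lt _ _ xc.
  by exists N => //; rewrite /I /= in_itv /= HN.
have h1 : (P \o (fun n => X @^-1` I n)) @ \oo --> P (X @^-1` `]-oo, c[).
  rewrite -cupI preimage_bigcup.
  apply: nondecreasing_cvg_mu.
  - by move=> i; apply: mXp; exact: measurable_itv.
  - by apply: bigcup_measurable => i _; apply: mXp; exact: measurable_itv.
  - move=> n m nm; apply/subsetPset; apply: preimage_subset.
    exact/subsetPset/ndI.
have mfE := (measurable_EFinP setT f).2 mf.
have mI n : measurable (I n) by exact: measurable_itv.
have h2 : (fun n => \int[lebesgue_measure]_(u in I n) (f u)%:E)%E @ \oo -->
    (\int[lebesgue_measure]_(u in `]-oo, c[) (f u)%:E)%E.
  under eq_fun do rewrite integral_mkcond.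
  rewrite integral_mkcond.
  have -> : (fun u => (f u)%:E) \_ `]-oo, c[ =
      fun x => limn ((fun n => (fun u => (f u)%:E) \_ (I n))^~ x).
    apply/funext => x; apply/esym/cvg_lim => //.
    apply: cvg_near_cst.
    rewrite /patch; case: ifPn => [|xc].
      rewrite inE /= in_itv /= => xc.
      have [N HN] := arch_lt _ _ xc.
      exists N => // n /= Nn; rewrite ifT // inE /I /= in_itv /= HN //.
    apply: nearW => n; rewrite ifF //; apply/negbTE; apply: contra xc.
    rewrite !inE /I /= !in_itv /= => xn; apply: (le_lt_trans xn).
    by rewrite ltrBlDr ltrDl invr_gt0 ltr0Sn.
  apply: (@cvg_monotone_convergence _ _ _ lebesgue_measure setT measurableT).
  - move=> n /=.
    apply/(measurable_restrictT _ (mI n)).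
    apply: measurable_funS mfE => //.
  - move=> n x _; rewrite /patch; case: ifP => // _; rewrite lee_fin f0 //.
  - move=> x _ n m nm; rewrite /patch; case: ifPn => xn.
      rewrite ifT //; move: xn; rewrite !inE => xn.
      by have /subsetPset := ndI _ _ nm; apply.
    by case: ifP => // _; rewrite lee_fin f0.
have h3 : (P \o (fun n => X @^-1` I n)) = 
    (fun n => \int[lebesgue_measure]_(u in I n) (f u)%:E)%E.
  by apply/funext => n /=; rewrite hF hf.
rewrite h3 in h1.
rewrite hf -integral_itv_bndo_bndc; last first.
  by apply: measurable_funS mfE.
exact: (cvg_unique (@ereal_hausdorff R) h1 h2).
Qed.
End CDF.
Section Dyn.
Context {R : realType} {Omega : Type} (w : nat -> R) (g a : R)
  (eps : nat -> Omega -> R) (y0 : Omega -> bool).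
Local Notation y := (ydyn w g a eps y0).

Definition zdyn (m : nat) (b : bool) :=
  ydyn (fun k => w (k + m)) g a (fun k => eps (k + m)) (fun _ => b).

Lemma restart m b om : y m om = b -> forall j, y (m + j) om = zdyn m b j om.
Proof.
move=> hb; elim=> [|j IH]; first by rewrite addn0.
by rewrite addnS /= IH /zdyn /= addSn addnC.
Qed.

Lemma yS k om : y k.+1 om = (0 < w k.+1 + g * (y k om)%:R + a - eps k.+1 om).
Proof. by []. Qed.

Lemma E1_y k om : g < 0 -> E1 w g a eps k.+1 om -> y k.+1 om = true.
Proof.
move=> g0; rewrite /E1 /= => h; apply/idP.
rewrite subr_gt0; apply: (lt_le_trans h); rewrite lerD2r lerD2l.
by case: (y k om); rewrite ?mulr1 ?mulr0 // ltW.
Qed.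

Lemma E3_y k om : g < 0 -> E3 w g a eps k.+1 om -> y k.+1 om = false.
Proof.
move=> g0; rewrite /E3 /= => h; apply/negbTE; rewrite -leNgt.
rewrite subr_le0; apply: le_trans h; rewrite lerD2r gerDl.
by case: (y k om); rewrite ?mulr1 ?mulr0 // ltW.
Qed.

Lemma E2_y k om : E2 w g a eps k.+1 om -> y k.+1 om = ~~ y k om.
Proof.
rewrite /E2 /= => -[h1 h2].
case: (y k om); rewrite ?mulr1 ?mulr0 ?addr0 /=.
  by apply/negbTE; rewrite -leNgt subr_le0.
by rewrite subr_gt0.
Qed.

Lemma E_cases k om : E1 w g a eps k om \/ E2 w g a eps k om \/ E3 w g a eps k om.
Proof.
rewrite /E1 /E2 /E3 /=.
case: (ltP (eps k om) (w k + g + a)) => h1; first by left.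
case: (ltP (eps k om) (w k + a)) => h2; first by right; left.
by right; right.
Qed.

Lemma y_true_E1 k om : y k om = true -> y k.+1 om = true -> E1 w g a eps k.+1 om.
Proof.
rewrite yS => -> /=; rewrite mulr1 subr_gt0 => h; exact: h.
Qed.

Lemma y_step k om dv : y k om = dv ->
  (y k.+1 om = true <-> eps k.+1 om < w k.+1 + g * dv%:R + a).
Proof. by move=> h; rewrite yS h subr_gt0. Qed.
End Dyn.

Lemma ydyn_meas {R : realType} d' (M : measurableType d') (w : nat -> R) (g a : R)
  (eps : nat -> M -> R) (y0 : M -> bool) n :
  measurable [set om | y0 om] ->
  (forall k, (1 <= k <= n)%N -> forall B : set R, measurable B -> measurable (eps k @^-1` B)) ->
  forall b, measurable [set om | ydyn w g a eps y0 n om = b].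
Proof.
have bC (h : M -> bool) : [set om | h om = false] = ~` [set om | h om = true].
  by apply/seteqP; split => om /=; case: (h om).
move=> my0; elim: n => [|n IH] hep.
  by case; [exact: my0|rewrite bC; apply: measurableC; exact: my0].
have IH' : forall b, measurable [set om | ydyn w g a eps y0 n om = b].
  apply: IH => k /andP[k1 kn]; apply: hep; rewrite k1 /=; exact: leqW.
have hepn : forall B : set R, measurable B -> measurable (eps n.+1 @^-1` B).
  by apply: hep; rewrite leqnn.
have mt : measurable [set om | ydyn w g a eps y0 n.+1 om = true].
  have -> : [set om | ydyn w g a eps y0 n.+1 om = true] =
     ([set om | ydyn w g a eps y0 n om = true] `&`
        eps n.+1 @^-1` [set` `]-oo, w n.+1 + g * 1 + a[]) `|`
     ([set om | ydyn w g a eps y0 n om = false] `&`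
        eps n.+1 @^-1` [set` `]-oo, w n.+1 + g * 0 + a[]).
    apply/seteqP; split => om /=; rewrite !in_itv /=;
      case: (ydyn w g a eps y0 n om) => /=; rewrite ?subr_gt0;
      by [move=> h; left|move=> h; right|case=> -[]|case=> -[]].
  by apply: measurableU; apply: measurableI; try exact: IH';
    apply: hepn; exact: measurable_itv.
by case => //; rewrite bC; exact: measurableC.
Qed.

Section Model.
Context {R : realType} {dm : measure_display} {Omega : measurableType dm}
  (P : probability Omega R) (T : nat) (w : nat -> R) (gamma alpha : R)
  (F : R -> R) (eps : nat -> Omega -> R) (y0 : Omega -> bool).
Hypothesis g0 : gamma < 0.
Hypothesis my0 : measurable_fun setT y0.
Hypothesis meps : forall u, (1 <= u <= T)%N -> measurable_fun setT (eps u).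
Let Z := (fun i : 'I_T.+1 => if val i == 0%N then (fun om => (y0 om)%:R) else eps (val i)).
Hypothesis hind : mutually_independent P Z.
Hypothesis hF : forall u, (1 <= u <= T)%N -> forall c, P (eps u @^-1` `]-oo, c]) = (F c)%:E.
Hypothesis hac : abs_cont_cdf F.

Local Notation y := (ydyn w gamma alpha eps y0).

Lemma mZ i : measurable_fun setT (Z i).
Proof.
rewrite /Z; case: eqP => [_|i0].
  have mb : measurable_fun (setT : set bool) (fun b : bool => (b%:R : R)).
    by move=> _ B _.
  exact: (measurableT_comp mb my0).
apply: meps; case: i i0 => [i hi] /= i0; apply/andP; split; last by rewrite -ltnS.
by rewrite lt0n; apply/eqP; exact: i0.
Qed.

Lemma meps_pre u B : (1 <= u <= T)%N -> measurable B -> measurable (eps u @^-1` B).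
Proof. by move=> hu mB; rewrite -(setTI (_ @^-1` _)); apply: meps. Qed.

Lemma my0_set : measurable [set om | y0 om].
Proof.
have -> : [set om | y0 om] = setT `&` y0 @^-1` [set true].
  by apply/seteqP; split => om /=; [move=> h; split|case].
exact: my0.
Qed.

Lemma y_meas n b : (n <= T)%N -> measurable [set om | y n om = b].
Proof.
move=> nT; apply: ydyn_meas; first exact: my0_set.
move=> k /andP[k1 kn] B mB; apply: meps_pre => //; rewrite k1 /=; exact: leq_trans kn nT.
Qed.

Section Tau.
Variable k : nat.
Hypothesis kT : (k.+1 < T.+1)%N.
Let j : 'I_T.+1 := Ordinal kT.
Let G := Grect T.+1 Z j.
Let M := g_sigma_algebraType G.

Lemma sG_meas (A : set Omega) : <<s G >> A -> measurable A.
Proof.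
apply: smallest_sub; first exact: sigma_algebra_measurable.
move=> _ [B [mB [_ ->]]]; exact: (rect_meas _ _ mZ B mB).
Qed.

Lemma key D c : <<s G >> D ->
  P (D `&` [set om | eps k.+1 om < c]) = ((F c)%:E * P D)%E.
Proof.
move=> sD.
have hZ : Z j = eps k.+1 by [].
have -> : [set om | eps k.+1 om < c] = Z j @^-1` [set` `]-oo, c[].
  by apply/seteqP; split => om; rewrite /= hZ in_itv /=.
rewrite (indep_sigma P _ _ mZ hind j _ (measurable_itv _) _ sD) muleC; congr (_ * _)%E.
have hk : (1 <= k.+1 <= T)%N by rewrite /= -ltnS kT.
rewrite hZ; exact: (cdf_lt P _ _ (meps _ hk) (hF _ hk) hac c).
Qed.

Lemma eps_G i B : (1 <= i <= T)%N -> i != k.+1 -> measurable B ->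
  <<s G >> (eps i @^-1` B).
Proof.
move=> /andP[i1 iT] ik mB; apply: sub_sigma_algebra.
have iT1 : (i < T.+1)%N by rewrite ltnS.
pose l : 'I_T.+1 := Ordinal iT1.
exists (fun m => if m == l then B else setT); split.
  by move=> m; case: ifP.
split; first by rewrite ifF //; apply/negbTE; apply: contra ik => /eqP [] ->.
apply/seteqP; split => om /=.
  move=> h m _; case: ifPn => [/eqP ->|_] //.
  by rewrite /Z /= ifF //; apply/negbTE; rewrite -lt0n.
move=> /(_ l I); rewrite eqxx /Z /= ifF //; apply/negbTE; rewrite -lt0n //.
Qed.

Lemma y0_G : <<s G >> [set om | y0 om].
Proof.
apply: sub_sigma_algebra.
exists (fun m : 'I_T.+1 => if m == ord0 then [set (1 : R)] else setT); split.
  by move=> m; case: ifP.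
have jn0 : (j == ord0) = false by [].
split; first by rewrite jn0.
apply/seteqP; split => om /=.
  move=> h m _; case: ifPn => [/eqP ->|_] //.
  by rewrite /Z /= h.
move=> /(_ ord0 I); rewrite eqxx /Z /=.
by case: (y0 om) => //= /eqP; rewrite eq_sym oner_eq0.
Qed.

Lemma y_G n b : (n <= k)%N -> <<s G >> [set om | y n om = b].
Proof.
move=> nk.
apply: (@ydyn_meas R _ M w gamma alpha eps y0 n); first exact: y0_G.
move=> i /andP[i1 iN] B mB; apply: eps_G => //.
  by rewrite i1 /=; apply: (leq_trans iN); apply: (leq_trans nk); rewrite -ltnS ltnW.
by rewrite neq_ltn ltnS (leq_trans iN nk).
Qed.

Lemma z_G b n v : (k.+2 + n <= T)%N ->
  <<s G >> [set om | zdyn w gamma alpha eps k.+2 b n om = v].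
Proof.
move=> hn.
apply: (@ydyn_meas R _ M _ gamma alpha (fun i => eps (i + k.+2)) (fun _ => b) n).
  have -> : [set om : M | b] = if b then setT else set0.
    by apply/seteqP; split=> om; case: b.
  by case: b; [exact: (@measurableT _ M)|exact: (@measurable0 _ M)].
move=> i /andP[i1 iN] B mB; apply: eps_G => //.
  by rewrite addn_gt0 i1 /=; apply: leq_trans hn; rewrite addnC leq_add2l.
by apply/eqP; lia.
Qed.

Lemma epsk2_G B : (k.+2 <= T)%N -> measurable B -> <<s G >> (eps k.+2 @^-1` B).
Proof. by move=> hk mB; apply: eps_G => //; rewrite neq_ltn ltnSn orbT. Qed.


Let Ys n b := [set om | y n om = b].

Lemma Ys_meas n b : (n <= T)%N -> measurable (Ys n b).
Proof. exact: y_meas. Qed.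

Lemma E1_meas' : (k.+2 <= T)%N -> measurable (E1 w gamma alpha eps k.+2).
Proof.
move=> hk; have -> : E1 w gamma alpha eps k.+2 =
   eps k.+2 @^-1` [set` `]-oo, w k.+2 + gamma + alpha[] .
  by apply/seteqP; split => om; rewrite /E1 /= in_itv.
by apply: meps_pre; [rewrite hk|exact: measurable_itv].
Qed.

Lemma E2_meas' : (k.+2 <= T)%N -> measurable (E2 w gamma alpha eps k.+2).
Proof.
move=> hk; have -> : E2 w gamma alpha eps k.+2 =
   eps k.+2 @^-1` [set` `[w k.+2 + gamma + alpha, w k.+2 + alpha[] .
  by apply/seteqP; split => om; rewrite /E2 /= in_itv /= => /andP.
by apply: meps_pre; [rewrite hk|exact: measurable_itv].
Qed.

Lemma E2_meas'' : (k.+2 <= T)%N -> measurable (E2 w gamma alpha eps k.+2).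
Proof. exact: E2_meas'. Qed.

Lemma E1_G : (k.+2 <= T)%N -> <<s G >> (E1 w gamma alpha eps k.+2).
Proof.
move=> hk; have -> : E1 w gamma alpha eps k.+2 =
   eps k.+2 @^-1` [set` `]-oo, w k.+2 + gamma + alpha[] .
  by apply/seteqP; split => om; rewrite /E1 /= in_itv.
by apply: epsk2_G => //; exact: measurable_itv.
Qed.

Lemma E3_G : (k.+2 <= T)%N -> <<s G >> (E3 w gamma alpha eps k.+2).
Proof.
move=> hk; have -> : E3 w gamma alpha eps k.+2 =
   eps k.+2 @^-1` [set` `[w k.+2 + alpha, +oo[] .
  by apply/seteqP; split => om; rewrite /E3 /= in_itv /= andbT.
by apply: epsk2_G => //; exact: measurable_itv.
Qed.

Let RS b om i : y k.+2 om = b -> y (k.+2 + i) om = zdyn w gamma alpha eps k.+2 b i om.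
Proof. by move=> hb; apply: restart. Qed.
Let E1y n om : E1 w gamma alpha eps n.+1 om -> y n.+1 om = true.
Proof. exact: E1_y. Qed.
Let E3y n om : E3 w gamma alpha eps n.+1 om -> y n.+1 om = false.
Proof. exact: E3_y. Qed.
Let E2y n om : E2 w gamma alpha eps n.+1 om -> y n.+1 om = ~~ y n om.
Proof. exact: E2_y. Qed.

Let ystep n om dv : y n om = dv ->
  (y n.+1 om = true <-> eps n.+1 om < w n.+1 + gamma * dv%:R + alpha).
Proof. exact: y_step. Qed.
Let yE1 n om : y n om = true -> y n.+1 om = true -> E1 w gamma alpha eps n.+1 om.
Proof. exact: y_true_E1. Qed.

Lemma core_true a1 a2 u1 u2 dv j1 j2 v1 v2 :
  (a1 <= k)%N -> (a2 <= k)%N -> (k.+2 + j1 <= T)%N -> (k.+2 + j2 <= T)%N ->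
  let C := (Ys a1 u1 `&` Ys a2 u2 `&` Ys k dv) `&`
           (Ys k.+2 true `&` Ys (k.+2 + j1) v1 `&` Ys (k.+2 + j2) v2) in
  P (Ys k.+1 true `&` C) =
   ((F (w k.+1 + gamma * dv%:R + alpha)) * fine (P (E1 w gamma alpha eps k.+2 `&` C)))%:E.
Proof.
move=> ha1 ha2 hj1 hj2 C.
set c := w k.+1 + gamma * dv%:R + alpha.
set z := zdyn w gamma alpha eps k.+2 true.
have hk2 : (k.+2 <= T)%N by lia.
set D := (Ys a1 u1 `&` Ys a2 u2 `&` Ys k dv) `&`
  (E1 w gamma alpha eps k.+2 `&` ([set om | z j1 om = v1] `&` [set om | z j2 om = v2])).
have sD : <<s G >> D.
  apply: (@measurableI _ M); first (apply: (@measurableI _ M); first apply: (@measurableI _ M)).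
  1-3: by apply: y_G.
  apply: (@measurableI _ M); first exact: E1_G.
  by apply: (@measurableI _ M); apply: z_G.
have hD1 : E1 w gamma alpha eps k.+2 `&` C = D.
  apply/seteqP; split => om /=.
    move=> [e1 [[[h1 h2] h3] [[h4 h5] h6]]].
    by split => //; split => //; split => /=; rewrite /z -(RS _ _ _ h4).
  move=> [[[h1 h2] h3] [e1 [h5 h6]]].
  have h4 := E1y _ _ e1.
  repeat split => //; [exact: (etrans (RS _ _ _ h4) h5) | exact: (etrans (RS _ _ _ h4) h6)].
have hD2 : Ys k.+1 true `&` C = D `&` [set om | eps k.+1 om < c].
  apply/seteqP; split => om /=.
    move=> [hy [[[h1 h2] h3] [[h4 h5] h6]]].
    split; last exact: (ystep _ _ _ h3).1 hy.
    split => //; split; first exact: yE1 _ _ hy h4.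
    by split => /=; rewrite /z -(RS _ _ _ h4).
  move=> [[[[h1 h2] h3] [e1 [h5 h6]]] hc].
  have hy := (ystep _ _ _ h3).2 hc.
  have h4 := E1y _ _ e1.
  repeat split => //; [exact: (etrans (RS _ _ _ h4) h5) | exact: (etrans (RS _ _ _ h4) h6)].
rewrite hD2 hD1 (key _ _ sD) EFinM fineK //.
by apply: fin_num_measure; exact: sG_meas _ sD.
Qed.

Lemma core_false a1 a2 u1 u2 dv j1 j2 v1 v2 :
  (a1 <= k)%N -> (a2 <= k)%N -> (k.+2 + j1 <= T)%N -> (k.+2 + j2 <= T)%N ->
  let C := (Ys a1 u1 `&` Ys a2 u2 `&` Ys k dv) `&`
           (Ys k.+2 false `&` Ys (k.+2 + j1) v1 `&` Ys (k.+2 + j2) v2) in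
  P (Ys k.+1 true `&` C) =
   (fine (P (E2 w gamma alpha eps k.+2 `&` C)) +
    (F (w k.+1 + gamma * dv%:R + alpha)) * fine (P (E3 w gamma alpha eps k.+2 `&` C)))%:E.
Proof.
move=> ha1 ha2 hj1 hj2 C.
set c := w k.+1 + gamma * dv%:R + alpha.
set z := zdyn w gamma alpha eps k.+2 false.
have hk2 : (k.+2 <= T)%N by lia.
set D := (Ys a1 u1 `&` Ys a2 u2 `&` Ys k dv) `&`
  (E3 w gamma alpha eps k.+2 `&` ([set om | z j1 om = v1] `&` [set om | z j2 om = v2])).
have sD : <<s G >> D.
  apply: (@measurableI _ M); first (apply: (@measurableI _ M); first apply: (@measurableI _ M)).
  1-3: by apply: y_G.
  apply: (@measurableI _ M); first exact: E3_G.
  by apply: (@measurableI _ M); apply: z_G.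
have hD1 : E3 w gamma alpha eps k.+2 `&` C = D.
  apply/seteqP; split => om /=.
    move=> [e3 [[[h1 h2] h3] [[h4 h5] h6]]].
    by split => //; split => //; split => /=; rewrite /z -(RS _ _ _ h4).
  move=> [[[h1 h2] h3] [e3 [h5 h6]]].
  have h4 := E3y _ _ e3.
  repeat split => //; [exact: (etrans (RS _ _ _ h4) h5) | exact: (etrans (RS _ _ _ h4) h6)].
have hD2 : Ys k.+1 true `&` C =
    (E2 w gamma alpha eps k.+2 `&` C) `|` (D `&` [set om | eps k.+1 om < c]).
  apply/seteqP; split => om /=.
    move=> [hy [[[h1 h2] h3] [[h4 h5] h6]]].
    case: (E_cases w gamma alpha eps k.+2 om) => [e1|[e2|e3]].
    - by have := E1y _ _ e1; rewrite h4.
    - by left.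
    right; split; last exact: (ystep _ _ _ h3).1 hy.
    split => //; split => //.
    by split => /=; rewrite /z -(RS _ _ _ h4).
  case.
    move=> [e2 hC]; split => //.
    have := E2y _ _ e2; case: hC => _ [[h4 _] _].
    move=> e; have h4p : y k.+2 om = false := h4; rewrite h4p in e.
    by move: e; rewrite /Ys /mkset; case: (y k.+1 om).
  move=> [[[[h1 h2] h3] [e3 [h5 h6]]] hc].
  have hy := (ystep _ _ _ h3).2 hc.
  have h4 := E3y _ _ e3.
  repeat split => //; [exact: (etrans (RS _ _ _ h4) h5) | exact: (etrans (RS _ _ _ h4) h6)].
have mC : measurable C.
  by repeat apply: measurableI; apply: Ys_meas; lia.
have mE2C : measurable (E2 w gamma alpha eps k.+2 `&` C).
  by apply: measurableI => //; exact: E2_meas'.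
have mDc : measurable (D `&` [set om | eps k.+1 om < c]).
  apply: measurableI; first exact: sG_meas _ sD.
  have -> : [set om | eps k.+1 om < c] = eps k.+1 @^-1` [set` `]-oo, c[].
    by apply/seteqP; split => om; rewrite /= in_itv.
  apply: meps_pre; [by rewrite /= -ltnS kT|exact: measurable_itv].
rewrite hD2.
transitivity (P (E2 w gamma alpha eps k.+2 `&` C) + P (D `&` [set om | (eps k.+1 om < c)%R]))%E.
  apply: measureU => //.
  apply/seteqP; split => om //= [[[_ e2] _] [[_ [e3 _]] _]].
  by have := lt_le_trans e2 e3; rewrite ltxx.
have fD : P D \is a fin_num by apply: fin_num_measure; exact: sG_meas _ sD.
have fE : P (E2 w gamma alpha eps k.+2 `&` C) \is a fin_num by apply: fin_num_measure.
by rewrite hD1 (key _ _ sD) EFinD EFinM !fineK.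
Qed.

Lemma core_true2 a1 a2 u1 u2 dv j1 j2 v1 v2 (C : set Omega) :
  (a1 <= k)%N -> (a2 <= k)%N -> (k.+2 + j1 <= T)%N -> (k.+2 + j2 <= T)%N ->
  (forall om, C om <-> ((y a1 om = u1 /\ y a2 om = u2 /\ y k om = dv) /\
     (y k.+2 om = true /\ y (k.+2 + j1) om = v1 /\ y (k.+2 + j2) om = v2))) ->
  P ([set om | y k.+1 om = true] `&` C) =
   ((F (w k.+1 + gamma * dv%:R + alpha)) * fine (P (E1 w gamma alpha eps k.+2 `&` C)))%:E.
Proof.
move=> ha1 ha2 hj1 hj2 hC.
have -> : C = (Ys a1 u1 `&` Ys a2 u2 `&` Ys k dv) `&`
           (Ys k.+2 true `&` Ys (k.+2 + j1) v1 `&` Ys (k.+2 + j2) v2).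
  apply/seteqP; split => om.
    by move=> /hC [[h1 [h2 h3]] [h4 [h5 h6]]].
  by move=> [[[h1 h2] h3] [[h4 h5] h6]]; apply/hC.
exact: core_true.
Qed.

Lemma core_false2 a1 a2 u1 u2 dv j1 j2 v1 v2 (C : set Omega) :
  (a1 <= k)%N -> (a2 <= k)%N -> (k.+2 + j1 <= T)%N -> (k.+2 + j2 <= T)%N ->
  (forall om, C om <-> ((y a1 om = u1 /\ y a2 om = u2 /\ y k om = dv) /\
     (y k.+2 om = false /\ y (k.+2 + j1) om = v1 /\ y (k.+2 + j2) om = v2))) ->
  P ([set om | y k.+1 om = true] `&` C) =
   (fine (P (E2 w gamma alpha eps k.+2 `&` C)) +
    (F (w k.+1 + gamma * dv%:R + alpha)) * fine (P (E3 w gamma alpha eps k.+2 `&` C)))%:E.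
Proof.
move=> ha1 ha2 hj1 hj2 hC.
have -> : C = (Ys a1 u1 `&` Ys a2 u2 `&` Ys k dv) `&`
           (Ys k.+2 false `&` Ys (k.+2 + j1) v1 `&` Ys (k.+2 + j2) v2).
  apply/seteqP; split => om.
    by move=> /hC [[h1 [h2 h3]] [h4 [h5 h6]]].
  by move=> [[[h1 h2] h3] [[h4 h5] h6]]; apply/hC.
exact: core_false.
Qed.

End Tau.
End Model.

Ltac solveC := split; let H := fresh "H" in (intro H; hnf in H; hnf; repeat match goal with h : _ /\ _ |- _ => destruct h end; repeat split; assumption).

Theorem lemma1 (R : realType) (dm : measure_display) (Omega : measurableType dm)
  (P : probability Omega R)
  (T K : nat) (x : nat -> 'I_K -> R) (beta : 'I_K -> R) (gamma alpha : R)
  (F : R -> R) (eps : nat -> Omega -> R) (y0 : Omega -> bool)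
  (s t : nat) :
  (* model restrictions: ||beta||_2 = 1 (A(e)), gamma < 0 *)
  \sum_(i < K) beta i ^+ 2 = 1 ->
  gamma < 0 ->
  (* measurability *)
  measurable_fun setT y0 ->
  (forall u, (1 <= u <= T)%N -> measurable_fun setT (eps u)) ->
  (* Assumption A(a), conditional on alpha and x^T:
     (y_0, eps_1, ..., eps_T) mutually independent *)
  mutually_independent P
    (fun i : 'I_T.+1 => if val i == 0%N then (fun om => (y0 om)%:R) else eps (val i)) ->
  (* eps_1, ..., eps_T identically distributed with common CDF F *)
  (forall u, (1 <= u <= T)%N -> forall c, P (eps u @^-1` `]-oo, c]) = (F c)%:E) ->
  (* Assumption A(b) *)
  abs_cont_cdf F -> full_support_cdf F ->
  (* indices *)
  (1 <= s)%N -> (s.+2 <= t)%N -> (t.+1 <= T)%N ->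
  let w := index_w x beta in
  let y := ydyn w gamma alpha eps y0 in
  forall (dv : bool) (tau : nat), (tau = s \/ tau = t) ->
    let C1 := [set om | y s.-1 om = dv /\ y t.-1 om = dv /\
                        y s.+1 om = true /\ y t.+1 om = true] in
    let C0 := [set om | y s.-1 om = dv /\ y t.-1 om = dv /\
                        y s.+1 om = false /\ y t.+1 om = false] in
    condP P [set om | y tau om = true] C1 =
      F (w tau + gamma * dv%:R + alpha) * condP P (E1 w gamma alpha eps tau.+1) C1
    /\
    condP P [set om | y tau om = true] C0 =
      condP P (E2 w gamma alpha eps tau.+1) C0 +
      F (w tau + gamma * dv%:R + alpha) * condP P (E3 w gamma alpha eps tau.+1) C0.
Proof.
move=> _ g0 my0 meps hind hF hac _ s1 hst htT w y dv tau htau.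
case: s s1 hst htau => [//|s'] _ hst htau.
case: t hst htT htau => [//|t'] hst htT htau C1 C0.
rewrite /condP.
case: htau => ->.
- have kT : (s'.+1 < T.+1)%N by lia.
  have e1 : (s'.+2 + (t' - s'.+2) = t')%N by lia.
  have e2 : (s'.+2 + (t' - s') = t'.+2)%N by lia.
  have ha : (s' <= s')%N by [].
  have hj1 : (s'.+2 + (t' - s'.+2) <= T)%N by lia.
  have hj2 : (s'.+2 + (t' - s') <= T)%N by lia.
  split.
    rewrite (core_true2 P _ _ _ _ _ _ _ g0 my0 meps hind hF hac _ kT s' s' dv dv dv
      (t' - s'.+2) (t' - s') dv true C1 ha ha hj1 hj2); last first.
      by move=> om; rewrite e1 e2 /C1; solveC.
    by rewrite /= mulrA.
  rewrite (core_false2 P _ _ _ _ _ _ _ g0 my0 meps hind hF hac _ kT s' s' dv dv dv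
      (t' - s'.+2) (t' - s') dv false C0 ha ha hj1 hj2); last first.
    by move=> om; rewrite e1 e2 /C0; solveC.
  by rewrite /= mulrDl mulrA.
- have kT : (t'.+1 < T.+1)%N by lia.
  have ha1 : (s' <= t')%N by lia.
  have ha2 : (s'.+2 <= t')%N by lia.
  have hj : (t'.+2 + 0 <= T)%N by lia.
  split.
    rewrite (core_true2 P _ _ _ _ _ _ _ g0 my0 meps hind hF hac _ kT s' s'.+2 dv true dv
      0 0 true true C1 ha1 ha2 hj hj); last first.
      by move=> om; rewrite addn0 /C1; solveC.
    by rewrite /= mulrA.
  rewrite (core_false2 P _ _ _ _ _ _ _ g0 my0 meps hind hF hac _ kT s' s'.+2 dv false dv
      0 0 false false C0 ha1 ha2 hj hj); last first.
    by move=> om; rewrite addn0 /C0; solveC.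
  by rewrite /= mulrDl mulrA.
Qed.
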